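(* Consider the game $\widehat{\mathcal{G}}_4$ described in the context. The strategy profile $\sigma^*$, in which all decoy voters apply for slot $s_2$ and all real voters apply for slot $s_1$, is a Nash equilibrium of $\widehat{\mathcal{G}}_4$.
   Context: There is a finite set $N$ of citizens partitioned into $\bar k>1$ districts $N_1,\dots,N_{\bar k}$; district $N_k$ contains $n_k^R\ge1$ real voters and $n_k^D$ decoy voters, $n_k^R+n_k^D>1$ (common knowledge; individual types private). Real voters value their ballot at $V>0$, decoy voters at $0$. Fix $1\le q\le\bar k-1$ and $\varepsilon>0$. Each citizen applies for slot $s_1$ or $s_2$. For district $k$ let $m_k$ be its number of $s_1$-applicants and $\rho_k=m_k/n_k^R$; let $\rho$ be the $q$-th smallest of $\rho_1,\dots,\rho_{\bar k}$, $C=\{k:\rho_k<\rho\}$, $T=\{k:\rho_k=\rho\}$, $c=|C|$, $t=|T|$; all districts in $C$ are selected and $q-c$ districts of $T$ are selected uniformly at random; the others are non-selected. Prices offered: $s_1$ in a selected district $V+\varepsilon$; $s_2$ in a selected district $2\varepsilon$; $s_1$ in a non-selected district $\varepsilon$; $s_2$ in a non-selected district $2\varepsilon$. Each applicant sells iff the price strictly exceeds his valuation, and the adversary must buy. Hence a decoy voter's payoff is the (expected) price offered to him, and a real voter's payoff is $V+\varepsilon$ if he applied for $s_1$ and his district is selected and $V$ otherwise. $\widehat{\mathcal{G}}_4$ is the simultaneous-move game in which each citizen chooses $s_1$ or $s_2$ with these expected payoffs. *)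

(* Defs.v *)
From HB Require Import structures.
From mathcomp Require Import all_boot all_order all_algebra.
Set Implicit Arguments. Unset Strict Implicit. Unset Printing Implicit Defensive.
Import Order.TTheory GRing.Theory Num.Theory.
Local Open Scope ring_scope.

(* Citizens: a finite type N.  dist i = district of citizen i,
   real i = true iff i is a real voter (false: decoy voter).
   A strategy profile s : {ffun N -> bool}; s i = true means "applies for s1",
   s i = false means "applies for s2". *)

Section Game.
Variables (R : realFieldType) (N : finType) (kbar : nat).
Variables (dist : N -> 'I_kbar) (real : N -> bool) (q : nat) (V eps : R).

Definition nR (k : 'I_kbar) : nat := #|[set i | (dist i == k) && real i]|.
Definition nD (k : 'I_kbar) : nat := #|[set i | (dist i == k) && ~~ real i]|.

Definition m_app (s : {ffun N -> bool}) (k : 'I_kbar) : nat :=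
  #|[set i | (dist i == k) && s i]|.

Definition rho_k (s : {ffun N -> bool}) (k : 'I_kbar) : R :=
  (m_app s k)%:R / (nR k)%:R.

Definition rho_q (s : {ffun N -> bool}) : R :=
  nth 0 (sort <=%R [seq rho_k s k | k <- enum 'I_kbar]) q.-1.

Definition Cset (s : {ffun N -> bool}) : {set 'I_kbar} :=
  [set k | rho_k s k < rho_q s].
Definition Tset (s : {ffun N -> bool}) : {set 'I_kbar} :=
  [set k | rho_k s k == rho_q s].

(* probability that district k is selected: districts of C surely,
   q - c of the t districts of T uniformly at random *)
Definition sel_prob (s : {ffun N -> bool}) (k : 'I_kbar) : R :=
  if k \in Cset s then 1
  else if k \in Tset s then (q - #|Cset s|)%:R / (#|Tset s|)%:R
  else 0.

Definition payoff (s : {ffun N -> bool}) (i : N) : R :=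
  let p := sel_prob s (dist i) in
  if real i then
    (if s i then p * (V + eps) + (1 - p) * V else V)
  else
    (if s i then p * (V + eps) + (1 - p) * eps else 2 * eps).

Definition deviate (s : {ffun N -> bool}) (i : N) (a : bool) : {ffun N -> bool} :=
  [ffun j => if j == i then a else s j].

Definition nash_eq (s : {ffun N -> bool}) : Prop :=
  forall (i : N) (a : bool), payoff (deviate s i a) i <= payoff s i.

Definition sigma_star : {ffun N -> bool} := [ffun i => real i].

End Game.

(* Main.v *)
Require Import Defs.
From HB Require Import structures.
From mathcomp Require Import all_boot all_order all_algebra.
From mathcomp Require Import lra.
Import Order.TTheory GRing.Theory Num.Theory.
Local Open Scope ring_scope.

Lemma sel_prob_ge0 (R : realFieldType) (N : finType) (kbar : nat)
    (dist : N -> 'I_kbar) (real : N -> bool) (q : nat) s k :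
  0 <= sel_prob R dist real q s k.
Proof.
rewrite /sel_prob; case: ifP => _ //; case: ifP => _ //.
by rewrite divr_ge0.
Qed.

Lemma sorted_ones (R : realFieldType) (n : nat) (r : R) :
  1 <= r -> sorted <=%O (rcons (nseq n (1 : R)) r).
Proof.
move=> h1; case: n => [|n] //=.
rewrite rcons_path; apply/andP; split.
  by elim: n => //= n ->; rewrite lexx.
by have -> : last (1:R) (nseq n 1) = 1 by elim: n.
Qed.

Theorem proposition2 (R : realFieldType) (N : finType) (kbar : nat)
    (dist : N -> 'I_kbar) (real : N -> bool) (q : nat) (V eps : R) :
  (1 < kbar)%N ->
  (forall k : 'I_kbar, (1 <= nR dist real k)%N) ->
  (forall k : 'I_kbar, (1 < nR dist real k + nD dist real k)%N) ->
  (1 <= q)%N -> (q <= kbar - 1)%N ->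
  0 < V -> 0 < eps ->
  nash_eq dist real q V eps (sigma_star real).
Proof.
move=> Hk HnR _ Hq1 Hqk HV He i a.
have Hdi : (deviate (sigma_star real) i a) i = a by rewrite ffunE eqxx.
have Hsame : a = real i -> deviate (sigma_star real) i a = sigma_star real.
  move=> ->; apply/ffunP => j; rewrite !ffunE; by case: eqP => [->|].
rewrite /payoff Hdi /sigma_star ffunE -/(sigma_star real).
case Hr: (real i); case: a Hdi Hsame => Hdi Hsame.
- by rewrite ?Hsame ?lexx.
- have := @sel_prob_ge0 R N kbar dist real q (sigma_star real) (dist i).
  move: (sel_prob R dist real q (sigma_star real) (dist i)) => p hp.
  have : 0 <= p * eps by rewrite mulr_ge0 // ltW.
  lra.
- set s' := deviate _ _ _.
  set k0 := dist i.
  have Hm : forall k, m_app dist s' k = (nR dist real k + (k == k0))%N.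
    move=> k; rewrite /m_app /nR.
    case: eqP => [->|/eqP hk].
      have -> : [set j | (dist j == k0) && s' j] =
                i |: [set j | (dist j == k0) && real j].
        apply/setP => j; rewrite !inE /s' /deviate ffunE /sigma_star ffunE.
        case: (eqVneq j i) => [->|] /=; first by rewrite eqxx.
        by [].
      by rewrite (cardsU1 i) inE Hr andbF addnC.
    rewrite /= addn0; apply: eq_card => j; rewrite !inE /s' /deviate ffunE /sigma_star ffunE.
    case: (eqVneq j i) => [->|] //=; rewrite -/k0 eq_sym (negbTE hk) //.
  have Hrho1 : forall k, k != k0 -> rho_k R dist real s' k = 1.
    move=> k hk; rewrite /rho_k Hm (negbTE hk) addn0 divff //.
    by rewrite pnatr_eq0 -lt0n HnR.
  set r := rho_k R dist real s' k0.
  have Hr1 : 1 < r.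
    rewrite /r /rho_k Hm eqxx natrD ltr_pdivlMr ?ltr0n ?HnR // mul1r.
    by rewrite ltrDl ltr01.
  have Hq : rho_q R dist real q s' = 1.
    rewrite /rho_q.
    have Hperm : perm_eq [seq rho_k R dist real s' k | k <- enum 'I_kbar]
                         (rcons (nseq (kbar - 1) 1) r).
      have hin : k0 \in enum 'I_kbar by rewrite mem_enum.
      apply: (perm_trans (perm_map _ (perm_to_rem hin))).
      rewrite perm_sym perm_rcons /= perm_cons.
      have -> : [seq rho_k R dist real s' k | k <- rem k0 (enum 'I_kbar)] =
                nseq (size (rem k0 (enum 'I_kbar))) 1.
        rewrite rem_filter ?enum_uniq //.
        elim: (enum 'I_kbar) => //= x l IH.
        by case: ifP => hx //=; rewrite IH Hrho1.
      by rewrite size_rem // size_enum_ord subn1.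
    have := perm_sort_leP _ _ Hperm.
    move=> ->.
    rewrite sort_le_id; last by apply: sorted_ones; apply: ltW.
    rewrite nth_rcons size_nseq.
    have -> : (q.-1 < kbar - 1)%N by case: q Hq1 Hqk => //= q' _ ; rewrite ltnS.
    by rewrite nth_nseq; case: ifP => //; rewrite (leq_trans _ Hqk) //; case: q Hq1 Hqk.
  have Hsel : sel_prob R dist real q s' k0 = 0.
    rewrite /sel_prob /Cset /Tset !inE -/r Hq.
    rewrite ltNge (ltW Hr1) /=.
    by rewrite eq_sym (lt_eqF Hr1).
  rewrite Hsel mul0r add0r subr0 mul1r.
  lra.
- by rewrite ?Hsame ?lexx.
Qed.
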